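(* Let $\hat a,\hat b\in\hat{\mathbb Q}$ and suppose there exist $\hat q,\hat p\in\hat{\mathbb U}$ with $\hat a\hat q=\hat p\hat b$. Suppose $\hat a=\hat x^*\hat\lambda\hat x$ and $\hat b=\hat y^*\hat\mu\hat y$, where $\hat x,\hat y\in\hat{\mathbb U}$ and $\hat\lambda=\lambda_1+\lambda_2\varepsilon$, $\hat\mu=\mu_1+\mu_2\varepsilon\in\mathbb{DC}$ with $\lambda_1,\mu_1\notin\mathbb R$. For $\hat m\in\hat{\mathbb U}$ define $$Q(\hat m)=\hat x^*\,(\overline{\lambda_1}/|\lambda_1|)\big(1-\operatorname{Im}(\lambda_2\overline{\lambda_1}/|\lambda_1|^2)\,i\,\varepsilon\big)\,\hat m\,\hat y,$$ $$P(\hat m)=\hat x^*\,\hat m\,\big(1-\operatorname{Im}(\mu_2\overline{\mu_1}/|\mu_1|^2)\,i\,\varepsilon\big)(\overline{\mu_1}/|\mu_1|)\,\hat y.$$ Then $$\{(\hat q,\hat p)\in\hat{\mathbb U}\times\hat{\mathbb U}:\hat a\hat q=\hat p\hat b\}=\{(Q(\hat m),P(\hat m)):\hat m\in\hat{\mathbb U}\}.$$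
   Context: $\mathbb{Q}$ denotes the real quaternions with units $i,j,k$; complex numbers are identified with quaternions $a+bi$ (so $i$ above is the imaginary unit). $\varepsilon$ satisfies $\varepsilon\ne0$, $\varepsilon^2=0$ and commutes with quaternions. $\hat{\mathbb Q}$ is the set of dual quaternions $\tilde p_{st}+\tilde p_{\mathcal I}\varepsilon$ with quaternions $\tilde p_{st},\tilde p_{\mathcal I}$, conjugate $\hat p^*=\tilde p_{st}^*+\tilde p_{\mathcal I}^*\varepsilon$. $\mathbb{DC}$ is the set of dual complex numbers $a+b\varepsilon$, $a,b\in\mathbb C$. $\hat{\mathbb U}$ is the set of unit dual quaternions, i.e. $\hat p$ with $|\hat p|=1$, where $|\hat p|=|\tilde p_{st}|+\frac{\mathrm{sc}(\tilde p_{st}^*\tilde p_{\mathcal I})}{|\tilde p_{st}|}\varepsilon$ for $\tilde p_{st}\ne0$, $\mathrm{sc}(\tilde p)=\frac12(\tilde p+\tilde p^* )$; equivalently $\hat p^*\hat p=\hat p\hat p^*=1$. $\operatorname{Re},\operatorname{Im}$ are real and imaginary parts of complex numbers. *)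

(* Defs.v *)
From Stdlib Require Import Reals.
Open Scope R_scope.

Record quat := mkQ { q0 : R; q1 : R; q2 : R; q3 : R }.

Definition qadd (p q : quat) : quat :=
  mkQ (q0 p + q0 q) (q1 p + q1 q) (q2 p + q2 q) (q3 p + q3 q).

Definition qmul (p q : quat) : quat :=
  mkQ (q0 p * q0 q - q1 p * q1 q - q2 p * q2 q - q3 p * q3 q)
      (q0 p * q1 q + q1 p * q0 q + q2 p * q3 q - q3 p * q2 q)
      (q0 p * q2 q - q1 p * q3 q + q2 p * q0 q + q3 p * q1 q)
      (q0 p * q3 q + q1 p * q2 q - q2 p * q1 q + q3 p * q0 q).

Definition qconj (p : quat) : quat := mkQ (q0 p) (- q1 p) (- q2 p) (- q3 p).

Definition qzero : quat := mkQ 0 0 0 0.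
Definition qone : quat := mkQ 1 0 0 0.

(* Dual quaternions  p_st + p_I eps, eps^2 = 0, eps central. *)
Record dquat := mkDQ { dst : quat; dinf : quat }.

Definition dqmul (p q : dquat) : dquat :=
  mkDQ (qmul (dst p) (dst q)) (qadd (qmul (dst p) (dinf q)) (qmul (dinf p) (dst q))).

Definition dqconj (p : dquat) : dquat := mkDQ (qconj (dst p)) (qconj (dinf p)).

Definition dqone : dquat := mkDQ qone qzero.

Definition dq_unit (p : dquat) : Prop := dqmul (dqconj p) p = dqone /\ dqmul p (dqconj p) = dqone.

Record cplx := mkC { cRe : R; cIm : R }.
Definition cmul (z w : cplx) : cplx :=
  mkC (cRe z * cRe w - cIm z * cIm w) (cRe z * cIm w + cIm z * cRe w).
Definition cconj (z : cplx) : cplx := mkC (cRe z) (- cIm z).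
Definition cabs (z : cplx) : R := sqrt (cRe z ^ 2 + cIm z ^ 2).
Definition cscale (r : R) (z : cplx) : cplx := mkC (r * cRe z) (r * cIm z).
Definition c2q (z : cplx) : quat := mkQ (cRe z) (cIm z) 0 0.

Definition dc (z1 z2 : cplx) : dquat := mkDQ (c2q z1) (c2q z2).
Definition c2dq (z : cplx) : dquat := dc z (mkC 0 0).

Definition one_minus_ieps (t : R) : dquat := mkDQ qone (mkQ 0 (- t) 0 0).

Definition phase_inv (l1 : cplx) : cplx := cscale (/ cabs l1) (cconj l1).
Definition im_ratio (l1 l2 : cplx) : R := cIm (cscale (/ (cabs l1 ^ 2)) (cmul l2 (cconj l1))).

Definition Qmap (x y : dquat) (l1 l2 : cplx) (m : dquat) : dquat :=
  dqmul (dqmul (dqmul (dqmul (dqconj x) (c2dq (phase_inv l1)))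
                      (one_minus_ieps (im_ratio l1 l2))) m) y.

Definition Pmap (x y : dquat) (m1 m2 : cplx) (m : dquat) : dquat :=
  dqmul (dqmul (dqmul (dqmul (dqconj x) m) (one_minus_ieps (im_ratio m1 m2)))
               (c2dq (phase_inv m1))) y.

(* Main.v *)
Require Import Defs.
From Stdlib Require Import Reals Lra Nsatz.
Open Scope R_scope.

Ltac dqd p := let a := fresh in let b := fresh in destruct p as [[? ? ? ?] [? ? ? ?]].

Lemma dqmul_assoc p q r : dqmul p (dqmul q r) = dqmul (dqmul p q) r.
Proof. dqd p; dqd q; dqd r; unfold dqmul, qmul, qadd; simpl; f_equal; f_equal; ring. Qed.
Lemma dqmul_1l p : dqmul dqone p = p.
Proof. dqd p; unfold dqmul, qmul, qadd, dqone, qone, qzero; simpl; f_equal; f_equal; ring. Qed.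
Lemma dqmul_1r p : dqmul p dqone = p.
Proof. dqd p; unfold dqmul, qmul, qadd, dqone, qone, qzero; simpl; f_equal; f_equal; ring. Qed.
Lemma dqconj_mul p q : dqconj (dqmul p q) = dqmul (dqconj q) (dqconj p).
Proof. dqd p; dqd q; unfold dqconj, dqmul, qmul, qadd, qconj; simpl; f_equal; f_equal; ring. Qed.
Lemma dqconj_invol p : dqconj (dqconj p) = p.
Proof. dqd p; unfold dqconj, qconj; simpl; f_equal; f_equal; ring. Qed.

Definition D (r0 r1 : R) := mkDQ (mkQ r0 0 0 0) (mkQ r1 0 0 0).
Lemma D_central r0 r1 p : dqmul (D r0 r1) p = dqmul p (D r0 r1).
Proof. dqd p; unfold D, dqmul, qmul, qadd; simpl; f_equal; f_equal; ring. Qed.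
Lemma D_mul a b c d : dqmul (D a b) (D c d) = D (a*c) (a*d+b*c).
Proof. unfold D, dqmul, qmul, qadd; simpl; f_equal; f_equal; ring. Qed.
Lemma D_conj a b : dqconj (D a b) = D a b.
Proof. unfold D, dqconj, qconj; simpl; f_equal; f_equal; ring. Qed.
Lemma D_cancel a b p q : a <> 0 -> dqmul (D a b) p = dqmul (D a b) q -> p = q.
Proof. intros Ha H.
  assert (E: forall z, dqmul (D (/a) (-b/(a*a))) (dqmul (D a b) z) = z).
  { intro z. rewrite dqmul_assoc, D_mul.
    replace (/a * a) with 1 by (field; auto).
    replace (/ a * b + - b / (a * a) * a) with 0 by (field; auto).
    apply dqmul_1l. }
  rewrite <- (E p), <- (E q), H; reflexivity. Qed.

Lemma unit_mul p q : dq_unit p -> dq_unit q -> dq_unit (dqmul p q).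
Proof. intros [H1 H2] [H3 H4]; split; rewrite dqconj_mul.
  - rewrite dqmul_assoc, <- (dqmul_assoc _ _ p), H1, dqmul_1r; auto.
  - rewrite dqmul_assoc, <- (dqmul_assoc _ q), H4, dqmul_1r; auto. Qed.
Lemma unit_conj p : dq_unit p -> dq_unit (dqconj p).
Proof. intros [H1 H2]; split; rewrite dqconj_invol; auto. Qed.
Definition uu l1 l2 := dqmul (c2dq (phase_inv l1)) (one_minus_ieps (im_ratio l1 l2)).
Definition vv m1 m2 := dqmul (one_minus_ieps (im_ratio m1 m2)) (c2dq (phase_inv m1)).
Definition rr l1 l2 := (cRe l2 * cRe l1 + cIm l2 * cIm l1)/cabs l1.

Lemma cabs_prop l : cIm l <> 0 -> cabs l > 0 /\ cabs l * cabs l = cRe l * cRe l + cIm l * cIm l.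
Proof. intro H. unfold cabs. split.
  - apply sqrt_lt_R0. nra.
  - rewrite sqrt_sqrt; nra. Qed.

Ltac crunch l1 :=
  destruct (cabs_prop l1 ltac:(assumption)) as [Hp Hn];
  destruct l1 as [a b]; simpl in *;
  unfold dqone, D, dqmul, qmul, qadd, dc, c2dq, c2q, phase_inv, cscale, cconj, one_minus_ieps, im_ratio, cmul, qone, qzero, dqconj, qconj, dqone in *; simpl in *;
  set (n := cabs {| cRe := a; cIm := b |}) in *; clearbody n;
  f_equal; f_equal.

Lemma lam_u l1 l2 : cIm l1 <> 0 -> dqmul (dc l1 l2) (uu l1 l2) = D (cabs l1) (rr l1 l2).
Proof. intro H. unfold uu, rr. destruct l2. crunch l1. all: try (field_simplify_eq; [simpl; nsatz | lra]). Qed.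
Lemma c2dq_unit z : cRe z * cRe z + cIm z * cIm z = 1 -> dq_unit (c2dq z).
Proof. destruct z as [a b]; simpl; intro H.
  unfold dq_unit, dqone, dqmul, dqconj, c2dq, c2q, dc, qmul, qadd, qconj, qone, qzero; simpl.
  split; f_equal; f_equal; simpl; nra. Qed.
Lemma ome_unit t : dq_unit (one_minus_ieps t).
Proof. unfold dq_unit, dqone, dqmul, dqconj, one_minus_ieps, qmul, qadd, qconj, qone, qzero; simpl.
  split; f_equal; f_equal; ring. Qed.
Lemma phase_norm l : cIm l <> 0 -> cRe (phase_inv l) * cRe (phase_inv l) + cIm (phase_inv l) * cIm (phase_inv l) = 1.
Proof. intro H. destruct (cabs_prop l H) as [Hp Hn]. unfold phase_inv, cscale, cconj; simpl.
  set (n := cabs l) in *. clearbody n. transitivity ((cRe l * cRe l + cIm l * cIm l)/(n*n)); [field; lra | rewrite <- Hn; field; lra]. Qed.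
Lemma u_unit l1 l2 : cIm l1 <> 0 -> dq_unit (uu l1 l2).
Proof. intro H. apply unit_mul. apply c2dq_unit, phase_norm; auto. apply ome_unit. Qed.
Lemma v_unit l1 l2 : cIm l1 <> 0 -> dq_unit (vv l1 l2).
Proof. intro H. apply unit_mul. apply ome_unit. apply c2dq_unit, phase_norm; auto. Qed.
Lemma v_mu l1 l2 : cIm l1 <> 0 -> dqmul (vv l1 l2) (dc l1 l2) = D (cabs l1) (rr l1 l2).
Proof. intro H. unfold vv, rr. destruct l2. crunch l1; try (field_simplify_eq; [simpl; nsatz | lra]). Qed.
Lemma lam_conj l1 l2 : cIm l1 <> 0 -> dqmul (dc l1 l2) (dqconj (dc l1 l2)) = D (cabs l1 * cabs l1) (2 * cabs l1 * rr l1 l2).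
Proof. intro H. unfold rr. destruct l2. crunch l1; try rewrite Hn; try field; lra. Qed.

Ltac assoc := repeat rewrite dqmul_assoc; reflexivity.

Lemma sandwich_D x r0 r1 : dq_unit x -> dqmul (dqmul (dqconj x) (D r0 r1)) x = D r0 r1.
Proof. intros [H1 H2]. rewrite <- D_central, <- dqmul_assoc, H1, dqmul_1r. reflexivity. Qed.

Lemma D_inj a b c d : D a b = D c d -> a = c /\ b = d.
Proof. intro H. split; [apply (f_equal (fun z => q0 (dst z))) in H | apply (f_equal (fun z => q0 (dinf z))) in H]; exact H. Qed.

Lemma Qmap_eq x y l1 l2 m : Qmap x y l1 l2 m = dqmul (dqmul (dqconj x) (dqmul (uu l1 l2) m)) y.
Proof. unfold Qmap, uu. assoc. Qed.
Lemma Pmap_eq x y l1 l2 m : Pmap x y l1 l2 m = dqmul (dqmul (dqconj x) (dqmul m (vv l1 l2))) y.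
Proof. unfold Pmap, vv. assoc. Qed.

Lemma conj_sq_L x L r0 r1 : dq_unit x -> dqmul L (dqconj L) = D r0 r1 ->
  dqmul (dqmul (dqmul (dqconj x) L) x) (dqconj (dqmul (dqmul (dqconj x) L) x)) = D r0 r1.
Proof. intros Hx HL. destruct Hx as [H1 H2].
  rewrite !dqconj_mul, dqconj_invol.
  transitivity (dqmul (dqmul (dqconj x) (dqmul L (dqmul (dqmul x (dqconj x)) (dqconj L)))) x); [assoc|].
  rewrite H2, dqmul_1l, HL. apply sandwich_D; split; auto. Qed.

Lemma conj_sq_r a q : dq_unit q -> dqmul (dqmul a q) (dqconj (dqmul a q)) = dqmul a (dqconj a).
Proof. intros [H1 H2]. rewrite dqconj_mul.
  transitivity (dqmul a (dqmul (dqmul q (dqconj q)) (dqconj a))); [assoc|].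
  rewrite H2, dqmul_1l. reflexivity. Qed.

Lemma conj_sq_l p b r0 r1 : dq_unit p -> dqmul b (dqconj b) = D r0 r1 ->
  dqmul (dqmul p b) (dqconj (dqmul p b)) = D r0 r1.
Proof. intros [H1 H2] Hb. rewrite dqconj_mul.
  transitivity (dqmul (dqmul p (dqmul b (dqconj b))) (dqconj p)); [assoc|].
  rewrite Hb, <- D_central, <- dqmul_assoc, H2, dqmul_1r. reflexivity. Qed.

Theorem theorem3p2 (a b x y : dquat) (l1 l2 m1 m2 : cplx) :
  (exists q p : dquat, dq_unit q /\ dq_unit p /\ dqmul a q = dqmul p b) ->
  dq_unit x -> dq_unit y ->
  a = dqmul (dqmul (dqconj x) (dc l1 l2)) x ->
  b = dqmul (dqmul (dqconj y) (dc m1 m2)) y ->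
  cIm l1 <> 0 -> cIm m1 <> 0 ->
  forall q p : dquat,
    (dq_unit q /\ dq_unit p /\ dqmul a q = dqmul p b) <->
    (exists m : dquat, dq_unit m /\ q = Qmap x y l1 l2 m /\ p = Pmap x y m1 m2 m).
Proof.
  intros [q' [p' [Hq' [Hp' E']]]] Hx Hy Ha Hb Hl Hm.
  assert (HA := conj_sq_L x _ _ _ Hx (lam_conj l1 l2 Hl)). rewrite <- Ha in HA.
  assert (HB := conj_sq_L y _ _ _ Hy (lam_conj m1 m2 Hm)). rewrite <- Hb in HB.
  assert (Hrs : cabs l1 = cabs m1 /\ rr l1 l2 = rr m1 m2).
  { pose proof (conj_sq_r a q' Hq') as E1. rewrite HA in E1.
    pose proof (conj_sq_l p' b _ _ Hp' HB) as E2. rewrite <- E', E1 in E2.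
    apply D_inj in E2. destruct E2 as [F1 F2].
    destruct (cabs_prop l1 Hl) as [P1 _]. destruct (cabs_prop m1 Hm) as [P2 _].
    assert (cabs l1 = cabs m1) by nra. split; auto.
    rewrite <- H in F2. apply Rmult_eq_reg_l with (2 * cabs l1); [exact F2 | lra]. }
  destruct Hrs as [R0 R1].
  pose proof (lam_u l1 l2 Hl) as LU. pose proof (v_mu m1 m2 Hm) as VM.
  rewrite <- R0, <- R1 in VM.
  set (Dr := D (cabs l1) (rr l1 l2)) in *.
  pose proof (u_unit l1 l2 Hl) as [U1 U2]. pose proof (v_unit m1 m2 Hm) as [V1 V2].
  set (U := uu l1 l2) in *. set (V := vv m1 m2) in *.
  pose proof (Qmap_eq x y l1 l2) as QE. pose proof (Pmap_eq x y m1 m2) as PE. fold U in QE. fold V in PE. clearbody U V.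
  set (L := dc l1 l2) in *. set (M := dc m1 m2) in *.
  pose proof Hx as [X1 X2]. pose proof Hy as [Y1 Y2].
  assert (DC : forall z, dqmul Dr z = dqmul z Dr) by (intro; apply D_central).
  intros q p. split.
  - intros [Hq [Hp E]].
    exists (dqmul (dqmul (dqmul (dqconj U) x) q) (dqconj y)).
    split; [|split].
    + repeat apply unit_mul; try apply unit_conj; auto; split; auto.
    + rewrite QE.
      transitivity (dqmul (dqmul (dqmul (dqconj x) (dqmul (dqmul U (dqconj U)) x)) q) (dqmul (dqconj y) y)); [|assoc].
      rewrite U2, Y1, dqmul_1l, dqmul_1r, X1, dqmul_1l. reflexivity.
    + rewrite PE.
      assert (HL : L = dqmul Dr (dqconj U)).
      { rewrite <- LU. transitivity (dqmul L (dqmul U (dqconj U))); [|assoc]. rewrite U2, dqmul_1r; auto. }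
      assert (HM : M = dqmul (dqconj V) Dr).
      { rewrite <- VM. transitivity (dqmul (dqmul (dqconj V) V) M); [|assoc]. rewrite V1, dqmul_1l; auto. }
      assert (E2 : dqmul Dr (dqmul (dqmul (dqmul (dqconj x) (dqconj U)) x) q) =
                   dqmul Dr (dqmul (dqmul (dqmul p (dqconj y)) (dqconj V)) y)).
      { transitivity (dqmul a q).
        - symmetry. rewrite Ha, HL.
          transitivity (dqmul (dqmul (dqmul (dqmul (dqconj x) Dr) (dqconj U)) x) q); [assoc|].
          rewrite <- DC. assoc.
        - rewrite E, Hb, HM.
          transitivity (dqmul (dqmul (dqmul (dqmul p (dqconj y)) (dqconj V)) Dr) y); [assoc|].
          rewrite <- (DC (dqmul (dqmul p (dqconj y)) (dqconj V))). assoc. }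
      unfold Dr in E2. apply D_cancel in E2; [|destruct (cabs_prop l1 Hl); lra].
      transitivity (dqmul (dqmul (dqmul (dqmul (dqconj x) (dqconj U)) x) q) (dqmul (dqconj y) (dqmul V y))); [|assoc].
      rewrite E2.
      transitivity (dqmul p (dqmul (dqconj y) (dqmul (dqmul (dqconj V) (dqmul (dqmul y (dqconj y)) V)) y))); [|assoc].
      rewrite Y2, dqmul_1l, V1, dqmul_1l, Y1, dqmul_1r. reflexivity.
  - intros [m [Hmu [Hq Hp]]]. subst q p.
    split; [|split].
    + rewrite QE. repeat apply unit_mul; try apply unit_conj; auto; split; auto.
    + rewrite PE. repeat apply unit_mul; try apply unit_conj; auto; split; auto.
    + rewrite QE, PE, Ha, Hb.
      transitivity (dqmul (dqmul (dqmul (dqconj x) (dqmul (dqmul L (dqmul x (dqconj x))) U)) m) y); [assoc|].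
      rewrite X2, dqmul_1r, LU.
      transitivity (dqmul (dqmul (dqconj x) (dqmul m (dqmul (dqmul V (dqmul y (dqconj y))) M))) y); [|assoc].
      rewrite Y2, dqmul_1r, VM, <- (DC m). assoc.
Qed.
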